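(* Consider an instance of the multi-vehicle dial-a-ride problem with vehicle locations $o_1,\dots,o_h$, capacity $\lambda$, and requests $(s_1,t_1),\dots,(s_m,t_m)$ in a metric $w$. Let $\mathcal{T}_s$ and $\mathcal{T}_t$ be sets of tours such that for each vehicle $o_{i'}$ there is exactly one tour $T_s=o_{i'}s_{j_1}s_{j_2}\dots s_{j_q}\in\mathcal{T}_s$ and exactly one tour $T_t=o_{i'}t_{j_1}t_{j_2}\dots t_{j_q}\in\mathcal{T}_t$ (same index sequence), and every request index appears in exactly one of these index sequences. For each such pair (writing $a_k=s_{j_k}$, $b_k=t_{j_k}$), build a route $W_{o_{i'}}$ as follows. If $q\le\lambda$, let $W_{o_{i'}}=o_{i'}a_1\dots a_q b_1\dots b_q$. If $q>\lambda$, choose $\theta$ uniformly at random from $\{1,\dots,\lambda\}$, let $N_\theta=\lceil (q-\theta)/\lambda\rceil+1$, split the index range $1,\dots,q$ into consecutive blocks $I_1=\{1,\dots,\theta\}$, $I_2=\{\theta+1,\dots,\theta+\lambda\}$, $\dots$, $I_{N_\theta}=\{\theta+\lambda(N_\theta-2)+1,\dots,q\}$, and let $W_{o_{i'}}$ be the walk starting at $o_{i'}$ that, for $j=1,\dots,N_\theta$ in order, visits $a_k$ for $k\in I_j$ in increasing order of $k$ and then $b_k$ for $k\in I_j$ in increasing order of $k$. Let $\mathcal{W}$ be the set of all routes built. Then $$\mathbb{E}[w(\mathcal{W})]\le \frac{2}{\lambda}\sum_{j=1}^m w(s_j,t_j)+3\big(w(\mathcal{T}_s)+w(\mathcal{T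}_t)\big).$$
   Context: The metric $w$ satisfies $w(a,a)=0$, symmetry and the triangle inequality. The weight of a walk $v_1v_2\dots v_q$ is $\sum_{j=1}^{q-1}w(v_j,v_{j+1})$; the weight of a tour $v_1v_2\dots v_q$ is $\sum_{j=1}^{q-1}w(v_j,v_{j+1})+w(v_q,v_1)$; the weight of a set of walks or tours is the sum of their weights. Sources, destinations and vehicle locations are treated as pairwise distinct points (possibly at distance $0$). *)

(* Defs.v *)
From HB Require Import structures.
From mathcomp Require Import all_boot all_order all_algebra.
Set Implicit Arguments. Unset Strict Implicit. Unset Printing Implicit Defensive.
Import Order.TTheory GRing.Theory Num.Theory.
Local Open Scope ring_scope.

(* Points of an instance with h vehicles and m requests: vehicle locations
   o_i, sources s_j, destinations t_j -- pairwise distinct by construction. *)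
Inductive point (h m : nat) : Type :=
  | Veh of 'I_h
  | Src of 'I_m
  | Dst of 'I_m.

Section Weights.
Variables (R : numDomainType) (P : Type) (w : P -> P -> R).

Fixpoint walkw (x : P) (r : seq P) : R :=
  match r with
  | [::] => 0
  | y :: r' => w x y + walkw y r'
  end.

Definition walk_weight (p : seq P) : R :=
  if p is x :: r then walkw x r else 0.

Definition tour_weight (p : seq P) : R :=
  if p is x :: r then walkw x r + w (last x r) x else 0.
End Weights.

(* Block I_j (j = 1..N) of the index sequence J (positions are 1-based in the
   paper): I_1 = positions 1..theta, I_j = positions theta+lam(j-2)+1 ..
   min(q, theta+lam(j-1)) for j >= 2. *)
Definition block {T : Type} (lam theta : nat) (J : seq T) (j : nat) : seq T :=
  if j == 1%N then take theta J
  else take lam (drop (theta + lam * (j - 2)) J).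

(* The route W_o built from vehicle location o and index sequence J
   (a_k = Src (J_k), b_k = Dst (J_k)), with random parameter theta. *)
Definition route {h m : nat} (lam theta : nat) (o : point h m)
    (J : seq 'I_m) : seq (point h m) :=
  let q := size J in
  if (q <= lam)%N then o :: (map (@Src h m) J ++ map (@Dst h m) J)
  else
    let N := ((q - theta + lam.-1) %/ lam + 1)%N in   (* ceil((q-theta)/lam)+1 *)
    let blk j := block lam theta J j in
    o :: flatten [seq map (@Src h m) (blk j) ++ map (@Dst h m) (blk j)
                 | j <- iota 1 N].

(* Main.v *)
Require Import Defs.
From HB Require Import structures.
From mathcomp Require Import all_boot all_order all_algebra.
From mathcomp Require Import lra ring zify.
Set Implicit Arguments. Unset Strict Implicit. Unset Printing Implicit Defensive.
Import Order.TTheory GRing.Theory Num.Theory.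
Local Open Scope ring_scope.

Section Gen.
Variables (R : realFieldType) (P : Type) (w : P -> P -> R).
Hypothesis w_refl : forall x, w x x = 0.
Hypothesis w_sym : forall x y, w x y = w y x.
Hypothesis w_tri : forall x y z, w x z <= w x y + w y z.

Lemma w_ge0 x y : 0 <= w x y.
Proof. have := w_tri x y x. rewrite w_refl (w_sym y x). lra. Qed.

Lemma walkw_ge0 x r : 0 <= walkw w x r.
Proof. elim: r x => [|y r IH] x /=; first lra. have := w_ge0 x y; have := IH y; lra. Qed.

Lemma walkw_cat x r1 r2 : walkw w x (r1 ++ r2) = walkw w x r1 + walkw w (last x r1) r2.
Proof. elim: r1 x => [|y r IH] x /=; first by rewrite add0r. by rewrite IH addrA. Qed.

Lemma walkw_last x r : w x (last x r) <= walkw w x r.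
Proof.
elim: r x => [|y r IH] x /=; first by rewrite w_refl.
have := w_tri x y (last y r); have := IH y; lra.
Qed.

Lemma tour_ge0 p : 0 <= tour_weight w p.
Proof. case: p => [|x r] /=; first lra. have := walkw_ge0 x r; have := w_ge0 (last x r) x; lra. Qed.

Variables (T : eqType) (a b : T -> P) (lam : nat).
Hypothesis lam_pos : (0 < lam)%N.

Lemma mem_walk (f : T -> P) x v s : v \in s -> w x (f v) <= walkw w x (map f s).
Proof.
elim: s x => [|y s IH] x //=; rewrite inE => /orP [/eqP ->|H].
  have := walkw_ge0 (f y) (map f s); lra.
have := IH (f y) H; have := w_tri x (f y) (f v); lra.
Qed.

Lemma last_ne (x y : T) s : s != [::] -> last x s = last y s.
Proof. by case: s. Qed.

Definition ab (B : seq T) := map a B ++ map b B.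
Definition LB (K : seq T) :=
  [seq take lam (drop (lam * i) K) | i <- iota 0 ((size K + lam.-1) %/ lam)].
Definition Fk (d : T) (K : seq T) (k : nat) := w (a (nth d K k)) (b (nth d K k)).
Definition Sf (d : T) (K : seq T) (off u : nat) := \sum_(0 <= k < size K)
   (if (((k + off) %% lam == u) && (k.+1 < size K))%N then Fk d K k else 0).

Lemma Fk_ge0 d K k : 0 <= Fk d K k.
Proof. exact: w_ge0. Qed.

Lemma Sf_ge0 d K off u : 0 <= Sf d K off u.
Proof. apply: sumr_ge0 => k _; case: ifP => _ //; exact: Fk_ge0. Qed.

Lemma LB_base K : (0 < size K <= lam)%N -> LB K = [:: K].
Proof.
move=> /andP [H1 H2]; rewrite /LB.
have -> : (size K + lam.-1 = lam + (size K).-1)%N by lia.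
rewrite divnDl // divnn lam_pos divn_small; last by lia.
by rewrite /= muln0 drop0 take_oversize.
Qed.

Lemma LB_step K : (lam < size K)%N -> LB K = take lam K :: LB (drop lam K).
Proof.
move=> H; rewrite /LB.
have -> : (size K + lam.-1 = lam + (size K - lam + lam.-1))%N by lia.
rewrite divnDl // divnn lam_pos add1n /= muln0 drop0 size_drop.
congr (_ :: _).
rewrite -[in iota 1 _](addn0 1%N) iotaDl -map_comp; apply: eq_map => i /=.
by rewrite drop_drop mulnDr muln1 addnC.
Qed.

Lemma step x k0 B' K2 rest C2 :
  K2 != [::] ->
  (forall y, walkw w y rest <= walkw w y (map a K2) + C2) ->
  walkw w x (ab (k0 :: B') ++ rest) <=
    walkw w x (map a (k0 :: B' ++ K2)) + 2 * walkw w (b k0) (map b B')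
    + 2 * w (a (last k0 B')) (b (last k0 B')) + C2.
Proof.
case: K2 => [|k1 K2'] // _ Hr.
set e := last k0 B'.
rewrite /ab -catA walkw_cat.
have -> : last x (map a (k0 :: B')) = a e by rewrite /= last_map.
rewrite walkw_cat.
have -> : last (a e) (map b (k0 :: B')) = b e by rewrite /= last_map.
rewrite -cat_cons map_cat walkw_cat.
have -> : last x (map a (k0 :: B')) = a e by rewrite /= last_map.
have := Hr (b e) => /=.
have := w_tri (a e) (b e) (b k0).
have := walkw_last (b k0) (map b B'); rewrite last_map -/e (w_sym (b e) (b k0)).
have := w_tri (b e) (a e) (a k1); rewrite (w_sym (b e) (a e)).
simpl. lra.
Qed.


Lemma ww_split k0 B' K2 :
  walkw w (b k0) (map b B') + walk_weight w (map b K2) <=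
  walk_weight w (map b (k0 :: B' ++ K2)).
Proof.
case: K2 => [|k1 K2'] /=; first by rewrite cats0 addr0.
rewrite map_cat walkw_cat /= last_map.
have := w_ge0 (b (last k0 B')) (b k1); lra.
Qed.

Lemma Sf_split d k0 B' K2 off u :
  K2 != [::] -> ((size B' + off) %% lam == u)%N ->
  w (a (last k0 B')) (b (last k0 B')) + Sf d K2 (off + (size B').+1) u <=
  Sf d (k0 :: B' ++ K2) off u.
Proof.
move=> HK Hu; rewrite /Sf.
have Hs : size (k0 :: B' ++ K2) = ((size B').+1 + size K2)%N by rewrite /= size_cat.
rewrite Hs [X in _ <= X](big_cat_nat _ (n := (size B').+1)) //=; last by lia.
rewrite (big_addn 0 _ (size B').+1) addKn.
rewrite big_nat_recr //=.
have -> : (((size B' + off) %% lam == u) && ((size B').+1 < (size B').+1 + size K2))%N = true.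
  by rewrite Hu /= -{1}(addn0 (size B').+1) ltn_add2l lt0n size_eq0.
have -> : Fk d (k0 :: B' ++ K2) (size B') = w (a (last k0 B')) (b (last k0 B')).
  rewrite /Fk -cat_cons nth_cat /= ltnSn.
  by have := nth_last d (k0 :: B'); rewrite /= => ->.
have H0 : 0 <= \sum_(0 <= i < size B')
   (if (((i + off) %% lam == u) && (i.+1 < (size B').+1 + size K2))%N then Fk d (k0 :: B' ++ K2) i else 0).
  by apply: sumr_ge0 => k _; case: ifP => _ //; exact: Fk_ge0.
suff -> : \sum_(0 <= i < size K2)
    (if (((i + (off + (size B').+1)) %% lam == u) && (i.+1 < size K2))%N then Fk d K2 i else 0)
  = \sum_(0 <= i < size K2)
    (if (((i + (size B').+1 + off) %% lam == u) && ((i + (size B').+1).+1 < (size B').+1 + size K2))%N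
     then Fk d (k0 :: B' ++ K2) (i + (size B').+1) else 0) by lra.
apply: eq_bigr => i _.
rewrite (addnC off) addnA -addSn (addnC i.+1) ltn_add2l.
rewrite /Fk -cat_cons nth_cat /=.
have -> : (i + (size B').+1 < (size B').+1)%N = false by lia.
by rewrite addnK.
Qed.

Lemma G_LB c d u : forall K off x, K != [::] -> ((lam.-1 + off) %% lam == u)%N ->
  (forall v, v \in K -> w (a (last v K)) (b v) <= c) ->
  walkw w x (flatten (map ab (LB K))) <=
    walkw w x (map a K) + c + 2 * walk_weight w (map b K) + 2 * Sf d K off u.
Proof.
move=> K; have [n] := ubnP (size K); elim: n K => // n IH K Hn off x HK Hu Hc.
case: (leqP (size K) lam) => Hl.
  rewrite LB_base; last by rewrite Hl lt0n size_eq0 HK.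
  case: K HK Hn Hl Hc => [|k0 K'] // _ Hn Hl Hc.
  rewrite /= cats0 /ab walkw_cat /= last_map.
  have := Hc k0 (mem_head _ _); rewrite /=.
  have := Sf_ge0 d (k0 :: K') off u; have := walkw_ge0 (b k0) (map b K'). lra.
rewrite LB_step //=.
have HK2 : drop lam K != [::] by rewrite -size_eq0 size_drop; lia.
case: K HK Hn Hl Hc HK2 => [|k0 K'] // _ Hn Hl Hc HK2.
have Ht : take lam (k0 :: K') = k0 :: take lam.-1 K' by case: lam lam_pos.
have Hd : drop lam (k0 :: K') = drop lam.-1 K' by case: lam lam_pos.
rewrite Ht Hd in HK2 *.
have HK : k0 :: K' = k0 :: take lam.-1 K' ++ drop lam.-1 K' by rewrite cat_take_drop.
have Hsz : size (take lam.-1 K') = lam.-1 by rewrite size_take; move: Hl => /=; case: ifP; lia.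
set K2 := drop lam.-1 K'.
set B' := take lam.-1 K'.
have Hrest : forall y, walkw w y (flatten [seq ab i | i <- LB K2]) <=
   walkw w y (map a K2) + (c + 2 * walk_weight w (map b K2) + 2 * Sf d K2 (off + lam) u).
  move=> y; rewrite !addrA; apply: IH => //.
  - by rewrite size_drop /=; move: Hn => /=; lia.
  - by rewrite addnA modnDr.
  - move=> v Hv; have := Hc v; rewrite HK -cat_cons mem_cat Hv orbT last_cat.
    by rewrite (last_ne _ v HK2); apply.
have Hstep := step x k0 B' HK2 Hrest.
rewrite -HK in Hstep.
have := ww_split k0 B' K2; rewrite -HK.
have := Sf_split d k0 (B':=B') (K2:=K2) (off:=off) (u:=u) HK2.
have -> : (off + (size B').+1 = off + lam)%N by rewrite Hsz; lia.
rewrite -HK Hsz Hu => HS Hww.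
have := HS is_true_true; lra.
Qed.


Definition Wg (theta : nat) (o : P) (J : seq T) :=
  if (size J <= lam)%N then o :: ab J
  else o :: ab (take theta J) ++ flatten (map ab (LB (drop theta J))).

Lemma vehicle (o : P) J d t : (t < lam)%N ->
  walk_weight w (Wg t.+1 o J) <=
  tour_weight w (o :: map a J) + 3 * tour_weight w (o :: map b J) + 2 * Sf d J 0 t.
Proof.
move=> Ht.
have HS := Sf_ge0 d J 0 t.
case: J HS => [|j0 J'] HS.
  rewrite /Wg /= w_refl; lra.
set J := j0 :: J'.
set z := last j0 J'.
set c := w (a z) o + walkw w o (map b J).
have HTs : tour_weight w (o :: map a J) = walkw w o (map a J) + w (a z) o.
  by rewrite /= last_map.
have HTt : walkw w o (map b J) <= tour_weight w (o :: map b J).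
  rewrite /=; have := w_ge0 (last (b j0) (map b J')) o; lra.
have Hww : walk_weight w (map b J) <= walkw w o (map b J).
  rewrite /=; have := w_ge0 o (b j0); lra.
have HcJ : forall v, v \in J -> w (a z) (b v) <= c.
  move=> v Hv; have := w_tri (a z) o (b v); have := mem_walk b o Hv.
  rewrite /c (w_sym (a z) o); lra.
rewrite /Wg; case: ifP => Hl.
  have H1 : ((lam.-1 + 0) %% lam == lam.-1)%N by rewrite addn0 modn_small // prednK.
  have H := @G_LB c d lam.-1 J 0 o isT H1 (fun v Hv => HcJ v Hv).
  rewrite LB_base in H; last by rewrite Hl.
  have E : flatten (map ab [:: J]) = ab J by rewrite /= cats0.
  rewrite E in H.
  have H0 : Sf d J 0 lam.-1 = 0.
    rewrite /Sf big1 // => k _; rewrite addn0.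
    case: (ltnP k.+1 (size J)) => Hk; last by rewrite andbF.
    rewrite modn_small; last lia.
    have -> : (k == lam.-1) = false by move: Hl; rewrite -/J; lia.
    by [].
  rewrite H0 in H; rewrite /walk_weight; rewrite /c in H; lra.
have Hl' : (lam < size J)%N by rewrite ltnNge Hl.
set K2 := drop t.+1 J.
set B' := take t J'.
have HK2 : K2 != [::] by rewrite -size_eq0 size_drop; lia.
have HB : size B' = t by rewrite size_take; move: Hl'; rewrite /= ltnS; case: ifP; lia.
have HJ : J = j0 :: B' ++ K2 by rewrite /J /K2 /B' /= cat_take_drop.
have Hu : ((lam.-1 + t.+1) %% lam == t)%N.
  by rewrite -addSnnS prednK // addnC modnDr modn_small.
have HcK : forall v, v \in K2 -> w (a (last v K2)) (b v) <= c.
  move=> v Hv; have Hz : last v K2 = z.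
    have E1 : z = last v J by [].
    by rewrite E1 HJ /= last_cat (last_ne _ v HK2).
  rewrite Hz; apply: HcJ; rewrite HJ -cat_cons mem_cat Hv orbT //.
have Hrest : forall y, walkw w y (flatten [seq ab i | i <- LB K2]) <=
   walkw w y (map a K2) + (c + 2 * walk_weight w (map b K2) + 2 * Sf d K2 t.+1 t).
  move=> y; have := (@G_LB c d t K2 t.+1 y HK2 Hu HcK); lra.
have Hstep := step o j0 B' HK2 Hrest.
rewrite -HJ in Hstep.
have := ww_split j0 B' K2; rewrite -HJ.
have := Sf_split d j0 (B':=B') (K2:=K2) (off:=0) (u:=t) HK2.
rewrite -HJ HB add0n addn0 modn_small // eqxx => /(_ isT) HS2 Hw2.
have -> : take t.+1 J = j0 :: B' by [].
rewrite /c in Hstep; rewrite {1}/walk_weight.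
lra.
Qed.



Lemma sum_Sf d J : \sum_(t < lam) Sf d J 0 t <= \sum_(j <- J) w (a j) (b j).
Proof.
rewrite (big_nth d) /Sf exchange_big /=.
apply: ler_sum => k _.
apply: (@le_trans _ _ (\sum_(t < lam) (if (k %% lam == t)%N then Fk d J k else 0))).
  apply: ler_sum => i _; rewrite addn0.
  case: (k %% lam == i)%N => //=; case: ifP => _ //; exact: Fk_ge0.
rewrite -big_mkcond /= (big_pred1 (Ordinal (ltn_pmod k lam_pos))); first by [].
by move=> i /=; rewrite eq_sym -val_eqE.
Qed.

End Gen.
Lemma sum_ffun (R : comNzRingType) (I J : finType) (F : J -> R) (i : I) :
  \sum_(f : {ffun I -> J}) F (f i) = (#|J|%:R ^+ #|I|.-1) * \sum_j F j.
Proof.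
have := @bigA_distr_bigA R 0 1 *%R +%R I J (fun i' j => if i' == i then F j else 1).
rewrite (bigD1 i) //= eqxx.
rewrite [X in _ * X = _](eq_bigr (fun _ => #|J|%:R)); last first.
  by move=> i' Hi; rewrite (negbTE Hi) sumr_const.
rewrite prodr_const cardC1 mulrC => ->.
apply: eq_bigr => f _; rewrite (bigD1 i) //= eqxx big1 ?mulr1 // => i' /negbTE ->.
by [].
Qed.

Lemma route_Wg h m lam theta (o : point h m) J :
  (0 < theta)%N ->
  route lam theta o J = Wg (@Src h m) (@Dst h m) lam theta o J.
Proof.
move=> Ht; rewrite /route /Wg; case: ifP => // Hl.
congr (_ :: _); rewrite addn1 /= /ab; congr (_ ++ _).
rewrite /LB size_drop -[in iota 2 _](addn0 2%N) iotaDl -!map_comp.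
congr flatten; apply: eq_map => i /=.
rewrite /block /= subn2 /= drop_drop (addnC (lam * i)).
by [].
Qed.

Unset Implicit Arguments.
Theorem lemma7 (R : realFieldType) (h m lam : nat)
    (w : point h m -> point h m -> R)
    (w_refl : forall a, w a a = 0)
    (w_sym : forall a b, w a b = w b a)
    (w_tri : forall a b c, w a c <= w a b + w b c)
    (lam_pos : (0 < lam)%N)
    (J : 'I_h -> seq 'I_m)
    (HJ : perm_eq (flatten [seq J i | i <- enum 'I_h]) (enum 'I_m)) :
  (lam%:R ^+ h)^-1 *
    (\sum_(th : {ffun 'I_h -> 'I_lam})
        \sum_(i < h) walk_weight w (route lam (th i).+1 (Veh m i) (J i)))
  <= 2 / lam%:R * (\sum_(j < m) w (Src h j) (Dst h j))
     + 3 * ((\sum_(i < h) tour_weight w (Veh m i :: map (@Src h m) (J i)))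
          + (\sum_(i < h) tour_weight w (Veh m i :: map (@Dst h m) (J i)))).
Proof.
set L := lam%:R : R.
have Lpos : 0 < L by rewrite ltr0n.
have L0 : L != 0 by rewrite gt_eqF.
pose Ts i := tour_weight w (Veh m i :: map (@Src h m) (J i)).
pose Tt i := tour_weight w (Veh m i :: map (@Dst h m) (J i)).
pose G j := w (Src h j) (Dst h j).
pose X i := \sum_(t < lam) walk_weight w (route lam t.+1 (Veh m i) (J i)).
have Hveh : forall i, X i <= L * (Ts i + 3 * Tt i) + 2 * \sum_(j <- J i) G j.
  move=> i; rewrite /X.
  have HTs := tour_ge0 w_refl w_sym w_tri (Veh m i :: map (@Src h m) (J i)).
  have HTt := tour_ge0 w_refl w_sym w_tri (Veh m i :: map (@Dst h m) (J i)).
  case E: (J i) => [|d J'].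
    rewrite big1 ?big_nil; last by move=> t _; rewrite route_Wg // /Wg /=.
    rewrite /Ts /Tt E in HTs HTt *; rewrite mulr0 addr0; apply: mulr_ge0; lra.
  apply: (@le_trans _ _ (\sum_(t < lam) (Ts i + 3 * Tt i + 2 * Sf w (@Src h m) (@Dst h m) lam d (J i) 0 t))).
    apply: ler_sum => t _; rewrite route_Wg // /Ts /Tt E.
    exact: vehicle.
  rewrite big_split /= sumr_const card_ord -mulr_natl -/L -mulr_sumr.
  have := sum_Sf w_refl w_sym w_tri (@Src h m) (@Dst h m) lam_pos d (J i).
  rewrite E /G; lra.
rewrite exchange_big /=.
under eq_bigr => i _ do rewrite (sum_ffun (fun t : 'I_lam => walk_weight w (route lam t.+1 (Veh m i) (J i))) i) card_ord card_ord -/L.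
have E : forall i : 'I_h, L ^+ h.-1 * X i = L ^+ h * (L^-1 * X i).
  move=> i; have Hh : (0 < h)%N by apply: leq_ltn_trans (ltn_ord i).
  by rewrite -{2}(prednK Hh) exprS (mulrC L) -mulrA (mulrA L) mulfV // mul1r.
rewrite (eq_bigr _ (fun i _ => E i)) -mulr_sumr mulrA mulVf ?expf_neq0 // mul1r -mulr_sumr.
have HS : \sum_(i < h) \sum_(j <- J i) G j = \sum_(j < m) G j.
  rewrite -[RHS]big_enum -(perm_big _ HJ) big_flatten /= big_map -big_enum.
  by [].
have HX : \sum_(i < h) X i <= L * (\sum_(i < h) Ts i + 3 * \sum_(i < h) Tt i) + 2 * \sum_(j < m) G j.
  have Hsum : forall (A B C : 'I_h -> R), \sum_(i < h) (L * (A i + 3 * B i) + 2 * C i)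
      = L * (\sum_(i < h) A i + 3 * \sum_(i < h) B i) + 2 * \sum_(i < h) C i.
    move=> A B C; rewrite big_split /= -!mulr_sumr big_split /= -mulr_sumr.
    by [].
  rewrite -HS -Hsum.
  apply: ler_sum => i _; exact: Hveh.
have HTs : 0 <= \sum_(i < h) Ts i by apply: sumr_ge0 => i _; exact: tour_ge0.
have HTt : 0 <= \sum_(i < h) Tt i by apply: sumr_ge0 => i _; exact: tour_ge0.
apply: (@le_trans _ _ (L^-1 * (L * (\sum_(i < h) Ts i + 3 * \sum_(i < h) Tt i) + 2 * \sum_(j < m) G j))).
  by apply: ler_wpM2l; [rewrite invr_ge0 ltW | exact: HX].
rewrite mulrDr mulrA mulVf // mul1r.
have -> : 2 / L * \sum_(j < m) w (Src h j) (Dst h j) = L^-1 * (2 * \sum_(j < m) G j).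
  by rewrite /G mulrA (mulrC _ 2).
rewrite -/(Ts _) -/(Tt _).
lra.
Qed.
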